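(* Let $A=\mathbb{C}[x,y,z]$ and let $a,b,c,d\in A$ with $d\neq 0$. Then the triples $c\,\mathrm{grad}(a)$ and $d\,\mathrm{grad}(b)$ are compatible if and only if $\det \mathrm{Jac}(a,b,cd^{-1})=0$ (in $Q(A)$).
   Context: $\mathrm{grad}(a)=(a_x,a_y,a_z)$, subscripts being partial derivatives, and $\mathrm{Jac}(f,g,h)$ is the $3\times3$ matrix with rows $\mathrm{grad}(f),\mathrm{grad}(g),\mathrm{grad}(h)$. A triple $F=(f,g,h)$ is a Poisson triple if there is a Poisson bracket with $\{y,z\}=f$, $\{z,x\}=g$, $\{x,y\}=h$. Two Poisson triples $F,G$ are compatible if $\lambda F+\mu G$ is a Poisson triple for all $\lambda,\mu\in\mathbb{C}$. *)

(* Defs.v *)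
From HB Require Import structures.
From mathcomp Require Import all_boot all_order all_algebra.
From mathcomp Require Import fraction.
From mathcomp Require Import complex.
From mathcomp Require Import reals.
From mathcomp Require Import mpoly.
Set Implicit Arguments. Unset Strict Implicit. Unset Printing Implicit Defensive.
Import GRing.Theory Num.Theory.
Local Open Scope ring_scope.


(* C = complex R for R : realType (any realType is the reals, so this is C). A = C[x,y,z]; x = 'X_0, y = 'X_1, z = 'X_2. *)
Definition PolyA (R : realType) := {mpoly (complex R)[3]}.

Definition triple (R : realType) := (PolyA R * PolyA R * PolyA R)%type.

Definition d_x {R : realType} (a : PolyA R) : PolyA R := mderiv (0 : 'I_3) a.
Definition d_y {R : realType} (a : PolyA R) : PolyA R := mderiv (1 : 'I_3) a.
Definition d_z {R : realType} (a : PolyA R) : PolyA R := mderiv (2 : 'I_3) a.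

Definition grad {R : realType} (a : PolyA R) : triple R := (d_x a, d_y a, d_z a).

Definition tmul {R : realType} (c : PolyA R) (F : triple R) : triple R :=
  (c * F.1.1, c * F.1.2, c * F.2).
Definition tlin {R : realType} (l m : complex R) (F G : triple R) : triple R :=
  (l *: F.1.1 + m *: G.1.1, l *: F.1.2 + m *: G.1.2, l *: F.2 + m *: G.2).

Definition is_poisson_bracket {R : realType} (br : PolyA R -> PolyA R -> PolyA R) : Prop :=
  [/\ (forall (l : complex R) (p q r : PolyA R), br (l *: p + q) r = l *: br p r + br q r),
      (forall (l : complex R) (p q r : PolyA R), br r (l *: p + q) = l *: br r p + br r q),
      (forall p q : PolyA R, br p q = - br q p),
      (forall p q r : PolyA R, br p (q * r) = q * br p r + br p q * r) &
      (forall p q r : PolyA R, br p (br q r) + br q (br r p) + br r (br p q) = 0)].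

Definition X_ {R : realType} (i : 'I_3) : PolyA R := 'X_i.

Definition poisson_triple {R : realType} (F : triple R) : Prop :=
  exists br, is_poisson_bracket br /\
    br (X_ 1) (X_ 2) = F.1.1 /\ br (X_ 2) (X_ 0) = F.1.2 /\ br (X_ 0) (X_ 1) = F.2.

Definition compatible {R : realType} (F G : triple R) : Prop :=
  forall l m : complex R, poisson_triple (tlin l m F G).

Definition QA (R : realType) := {fraction PolyA R}.
Definition toQ {R : realType} (a : PolyA R) : QA R := tofrac a.

(* Partial derivative of c/d in Q(A) (unique extension of the derivation,
   given by the quotient rule): (c_i d - c d_i) / d^2 *)
Definition dfrac {R : realType} (i : 'I_3) (c d : PolyA R) : QA R :=
  toQ (mderiv i c * d - c * mderiv i d) / toQ (d ^+ 2).

Definition Jac_frac {R : realType} (a b c d : PolyA R) : 'M[QA R]_3 :=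
  \matrix_(i < 3, j < 3)
    (if i == 0 then toQ (mderiv j a)
     else if i == 1 then toQ (mderiv j b)
     else dfrac j c d).

(* Main.v *)
Require Import Defs.
From HB Require Import structures.
From mathcomp Require Import all_boot all_order all_algebra.
From mathcomp Require Import fraction complex reals mpoly.
From mathcomp Require Import ring.
Set Implicit Arguments. Unset Strict Implicit. Unset Printing Implicit Defensive.
Import GRing.Theory Num.Theory.
Local Open Scope ring_scope.

Lemma det33 (K : comRingType) (M : 'M[K]_3) :
  \det M = M 0 0 * (M 1 1 * M 2 2 - M 1 2 * M 2 1)
         - M 0 1 * (M 1 0 * M 2 2 - M 1 2 * M 2 0)
         + M 0 2 * (M 1 0 * M 2 1 - M 1 1 * M 2 0).
Proof.
rewrite (expand_det_row _ 0) !big_ord_recl big_ord0 /cofactor.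
rewrite !(expand_det_row _ 0) !big_ord_recl !big_ord0 /cofactor !det_mx11 !mxE /=.
set N := fun a b : nat => M (inord a) (inord b).
have E : forall i j, M i j = N (val i) (val j) by move=> i j; rewrite /N !inord_val.
rewrite !E /= /bump /=.
rewrite (_ : (1 %% 3 = 1)%N) // (_ : ((1 + 1) %% 3 = 2)%N) //.
rewrite !addn0 !add0n (_ : (1 + 1 = 2)%N) //.
ring.
Qed.

Lemma detfrac (T : idomainType) (a0 a1 a2 b0 b1 b2 c0 c1 c2 d0 d1 d2 c d : T) :
  d != 0 ->
  tofrac a0 *
  (tofrac b1 * (tofrac (c2 * d - c * d2) / tofrac (d ^+ 2)) -
   tofrac b2 * (tofrac (c1 * d - c * d1) / tofrac (d ^+ 2))) -
  tofrac a1 *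
  (tofrac b0 * (tofrac (c2 * d - c * d2) / tofrac (d ^+ 2)) -
   tofrac b2 * (tofrac (c0 * d - c * d0) / tofrac (d ^+ 2))) +
  tofrac a2 *
  (tofrac b0 * (tofrac (c1 * d - c * d1) / tofrac (d ^+ 2)) -
   tofrac b1 * (tofrac (c0 * d - c * d0) / tofrac (d ^+ 2))) =
  tofrac
    (d *
     (a0 * (b1 * c2 - b2 * c1) - a1 * (b0 * c2 - b2 * c0) +
      a2 * (b0 * c1 - b1 * c0)) -
     c *
     (a0 * (b1 * d2 - b2 * d1) - a1 * (b0 * d2 - b2 * d0) +
      a2 * (b0 * d1 - b1 * d0))) /
  tofrac (d ^+ 2) :> {fraction T}.
Proof.
move=> _.
move: ((tofrac (d ^+ 2))^-1 : {fraction T}) => w.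
rewrite !(rmorphB, rmorphM, rmorphD) /=.
ring.
Qed.

Section Abs.
Variable S : comRingType.
Variable T : comAlgType S.
Variable D : 'I_3 -> T -> T.
Hypothesis DD : forall i p q, D i (p + q) = D i p + D i q.
Hypothesis DN : forall i p, D i (- p) = - D i p.
Hypothesis DM : forall i p q, D i (p * q) = D i p * q + p * D i q.
Hypothesis Dc : forall i j p, D i (D j p) = D j (D i p).
Hypothesis DZ : forall i (l : S) p, D i (l *: p) = l *: D i p.

Definition brT (f g h : T) (p q : T) : T :=
  f * (D 1 p * D 2 q - D 2 p * D 1 q) + g * (D 2 p * D 0 q - D 0 p * D 2 q)
  + h * (D 0 p * D 1 q - D 1 p * D 0 q).
Definition JT (f g h : T) : T :=
  h * D 1 f - g * D 2 f + f * D 2 g - h * D 0 g + g * D 0 h - f * D 1 h.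
Definition det3 (p q r : T) : T :=
  D 0 p * (D 1 q * D 2 r - D 2 q * D 1 r) - D 1 p * (D 0 q * D 2 r - D 2 q * D 0 r)
  + D 2 p * (D 0 q * D 1 r - D 1 q * D 0 r).
Definition Ncr (a b c d : T) := d * det3 a b c - c * det3 a b d.

Lemma dbr i f g h p q : D i (brT f g h p q) =
  brT (D i f) (D i g) (D i h) p q + brT f g h (D i p) q + brT f g h p (D i q).
Proof. rewrite /brT !(DD, DN, DM) !(Dc i). ring. Qed.

Lemma jacT f g h p q r :
  brT f g h p (brT f g h q r) + brT f g h q (brT f g h r p) + brT f g h r (brT f g h p q)
  = JT f g h * det3 p q r.
Proof.
rewrite {1 3 5}/brT !dbr /brT /JT /det3.
rewrite !(Dc 1 0) !(Dc 2 0) !(Dc 2 1).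
ring.
Qed.

Lemma brT_skew f g h p q : brT f g h p q = - brT f g h q p.
Proof. rewrite /brT; ring. Qed.

Lemma brT_leib f g h p q r : brT f g h p (q * r) = q * brT f g h p r + brT f g h p q * r.
Proof. rewrite /brT !DM; ring. Qed.

Lemma brT_lin1 f g h k p q r : (forall i, D i k = 0) ->
  brT f g h (k * p + q) r = k * brT f g h p r + brT f g h q r.
Proof. move=> Dk; rewrite /brT !(DD, DM, Dk); ring. Qed.

Lemma brT_lin2 f g h k p q r : (forall i, D i k = 0) ->
  brT f g h r (k * p + q) = k * brT f g h r p + brT f g h r q.
Proof. move=> Dk; rewrite /brT !(DD, DM, Dk); ring. Qed.

Section Gen.
Variables x0 x1 x2 : T.
Hypothesis d00 : D 0 x0 = 1. Hypothesis d01 : D 0 x1 = 0. Hypothesis d02 : D 0 x2 = 0.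
Hypothesis d10 : D 1 x0 = 0. Hypothesis d11 : D 1 x1 = 1. Hypothesis d12 : D 1 x2 = 0.
Hypothesis d20 : D 2 x0 = 0. Hypothesis d21 : D 2 x1 = 0. Hypothesis d22 : D 2 x2 = 1.

Lemma brT_val f g h :
  [/\ brT f g h x1 x2 = f, brT f g h x2 x0 = g & brT f g h x0 x1 = h].
Proof. by split; rewrite /brT !(d00, d01, d02, d10, d11, d12, d20, d21, d22); ring. Qed.

Lemma JT_of_br (br : T -> T -> T) f g h :
  (forall p q, br p q = - br q p) ->
  (forall p, br p p = 0) ->
  (forall u p, br u p = D 0 p * br u x0 + D 1 p * br u x1 + D 2 p * br u x2) ->
  br x1 x2 = f -> br x2 x0 = g -> br x0 x1 = h ->
  br x0 (br x1 x2) + br x1 (br x2 x0) + br x2 (br x0 x1) = 0 ->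
  JT f g h = 0.
Proof.
move=> sk z rep vf vg vh; rewrite vf vg vh (rep x0 f) (rep x1 g) (rep x2 h).
rewrite !z (sk x0 x2) (sk x1 x0) (sk x2 x1) vf vg vh => <-.
rewrite /JT; ring.
Qed.
End Gen.

Lemma JTtri k1 k2 a b c d : (forall i, D i k1 = 0) -> (forall i, D i k2 = 0) ->
  JT (k1 * (c * D 0 a) + k2 * (d * D 0 b)) (k1 * (c * D 1 a) + k2 * (d * D 1 b))
     (k1 * (c * D 2 a) + k2 * (d * D 2 b)) = - (k1 * k2) * Ncr a b c d.
Proof.
move=> D1 D2; rewrite /JT /Ncr /det3 !(DD, DM, D1, D2).
rewrite !(Dc 1 0) !(Dc 2 0) !(Dc 2 1).
ring.
Qed.
Lemma D1 i : D i 1 = 0.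
Proof.
have := DM i 1 1; rewrite mulr1 mul1r mulr1 => H.
by apply: (@addrI _ (D i 1)); rewrite addr0 -H.
Qed.

Lemma Dalg i (l : S) : D i (l%:A) = 0.
Proof. by rewrite DZ D1 scaler0. Qed.

Lemma JTsc (l m : S) a b c d :
  JT (l *: (c * D 0 a) + m *: (d * D 0 b)) (l *: (c * D 1 a) + m *: (d * D 1 b))
     (l *: (c * D 2 a) + m *: (d * D 2 b)) = - ((l * m) *: Ncr a b c d).
Proof.
have := JTtri a b c d (Dalg^~ l) (Dalg^~ m); rewrite !mulr_algl => ->.
by rewrite scalerA mulNr mulr_algl.
Qed.

Lemma JTsc0 (l m : S) a b c d : Ncr a b c d = 0 ->
  JT (l *: (c * D 0 a) + m *: (d * D 0 b)) (l *: (c * D 1 a) + m *: (d * D 1 b))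
     (l *: (c * D 2 a) + m *: (d * D 2 b)) = 0.
Proof. by move=> N0; rewrite JTsc N0 scaler0 oppr0. Qed.

Lemma brT_lin1s f g h (l : S) p q r :
  brT f g h (l *: p + q) r = l *: brT f g h p r + brT f g h q r.
Proof. by have := brT_lin1 f g h p q r (Dalg^~ l); rewrite !mulr_algl. Qed.

Lemma brT_lin2s f g h (l : S) p q r :
  brT f g h r (l *: p + q) = l *: brT f g h r p + brT f g h r q.
Proof. by have := brT_lin2 f g h p q r (Dalg^~ l); rewrite !mulr_algl. Qed.

Lemma brT_jac0 f g h p q r : JT f g h = 0 ->
  brT f g h p (brT f g h q r) + brT f g h q (brT f g h r p) + brT f g h r (brT f g h p q) = 0.
Proof. by move=> J; rewrite jacT J mul0r. Qed.
End Abs.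

Section Conc.
Variable R : realType.
Local Notation A := (PolyA R).

Lemma dX (i j : 'I_3) : mderiv i ('X_j : A) = if j == i then 1 else 0.
Proof.
rewrite mderivX mnm1E; case: eqVneq => [->|_]; last by rewrite scale0r.
rewrite scale1r (_ : (U_(i) - U_(i))%MM = 0%MM) ?mpolyX0 //.
by apply/mnmP => k; rewrite mnmBE subnn mnm0E.
Qed.

Definition Prep (br : A -> A -> A) (u p : A) : Prop :=
  br u p = mderiv 0 p * br u 'X_0 + mderiv 1 p * br u 'X_1 + mderiv 2 p * br u 'X_2.

Variable br : A -> A -> A.
Hypothesis Hl : forall (l : complex R) p q r, br r (l *: p + q) = l *: br r p + br r q.
Hypothesis HL : forall p q r, br p (q * r) = q * br p r + br p q * r.
Variable u : A.

Lemma Hadd p q : br u (p + q) = br u p + br u q.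
Proof. by have := Hl 1 p q u; rewrite !scale1r. Qed.
Lemma H0 : br u 0 = 0.
Proof. by apply: (@addrI _ (br u 0)); rewrite -Hadd !addr0. Qed.
Lemma HZ l p : br u (l *: p) = l *: br u p.
Proof. by rewrite -[l *: p]addr0 Hl H0 addr0. Qed.
Lemma H1 : br u 1 = 0.
Proof.
have := HL u 1 1; rewrite [in br u (1 * 1)]mulr1 mul1r mulr1 => H.
by apply: (@addrI _ (br u 1)); rewrite addr0 -H.
Qed.
Lemma P0 : Prep br u 0. Proof. rewrite /Prep H0 !mderiv0; ring. Qed.
Lemma P1 : Prep br u 1. Proof. rewrite /Prep H1 -mpolyC1 !mderivC; ring. Qed.
Lemma PD p q : Prep br u p -> Prep br u q -> Prep br u (p + q).
Proof. rewrite /Prep Hadd !mderivD => -> ->; ring. Qed.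
Lemma PM p q : Prep br u p -> Prep br u q -> Prep br u (p * q).
Proof. rewrite /Prep HL !mderivM => -> ->; ring. Qed.
Lemma PZ l p : Prep br u p -> Prep br u (l *: p).
Proof. rewrite /Prep HZ !mderivZ => ->; rewrite -!mul_mpolyC; ring. Qed.
Lemma PX j : Prep br u 'X_j.
Proof.
have : (j == 0) || (j == 1) || (j == 2) by case: j => [[|[|[|k]]] Hk].
by case/orP => [/orP[]|] /eqP ->; rewrite /Prep !dX /=; ring.
Qed.
Lemma PXn j k : Prep br u ('X_j ^+ k).
Proof.
elim: k => [|k IH]; first by rewrite expr0; exact: P1.
by rewrite exprS; exact: PM (PX j) IH.
Qed.
Lemma PXm m : Prep br u 'X_[m].
Proof.
rewrite mpolyXE_id.
apply: (big_ind (Prep br u)); [exact: P1 | exact: PM | move=> i _; exact: PXn].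
Qed.
Lemma repr_all p : Prep br u p.
Proof.
elim/mpolyind: p; first exact: P0.
move=> c m p _ _ Hp.
exact: (PD (PZ c (PXm m)) Hp).
Qed.
End Conc.

Section Final.
Variable R : realType.
Local Notation A := (PolyA R).
Local Notation DA := (@mderiv 3 (complex R)).

Lemma hDD i (p q : A) : mderiv i (p + q) = mderiv i p + mderiv i q.
Proof. exact: mderivD. Qed.
Lemma hDN i (p : A) : mderiv i (- p) = - mderiv i p.
Proof. exact: mderivN. Qed.
Lemma hDM i (p q : A) : mderiv i (p * q) = mderiv i p * q + p * mderiv i q.
Proof. exact: mderivM. Qed.
Lemma hDc i j (p : A) : mderiv i (mderiv j p) = mderiv j (mderiv i p).
Proof. exact: mderiv_comm. Qed.
Lemma hDC (l : complex R) i : mderiv i (l%:MP : A) = 0.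
Proof. exact: mderivC. Qed.

Lemma detJ (a b c d : A) : d != 0 ->
  \det (Jac_frac a b c d) = toQ (Ncr DA a b c d) / toQ (d ^+ 2).
Proof.
move=> dn0.
rewrite det33 !mxE /= /dfrac /Ncr /det3.
move: (mderiv 0 a) (mderiv 1 a) (mderiv 2 a) (mderiv 0 b) (mderiv 1 b) (mderiv 2 b)
  (mderiv 0 c) (mderiv 1 c) (mderiv 2 c) (mderiv 0 d) (mderiv 1 d) (mderiv 2 d)
  => a0 a1 a2 b0 b1 b2 c0 c1 c2 d0 d1 d2.
rewrite /toQ; exact: detfrac.
Qed.

Lemma skew0 (p : A) : p = - p -> p = 0.
Proof.
move=> H.
have : (2%:R : complex R) *: p = 0 by rewrite scaler_nat mulr2n {1}H addNr.
move/eqP; rewrite scaler_eq0 => /orP [|/eqP //].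
by rewrite pnatr_eq0.
Qed.

Lemma d00 : mderiv 0 ('X_0 : A) = 1. Proof. by rewrite dX. Qed.
Lemma d01 : mderiv 0 ('X_1 : A) = 0. Proof. by rewrite dX. Qed.
Lemma d02 : mderiv 0 ('X_2 : A) = 0. Proof. by rewrite dX. Qed.
Lemma d10 : mderiv 1 ('X_0 : A) = 0. Proof. by rewrite dX. Qed.
Lemma d11 : mderiv 1 ('X_1 : A) = 1. Proof. by rewrite dX. Qed.
Lemma d12 : mderiv 1 ('X_2 : A) = 0. Proof. by rewrite dX. Qed.
Lemma d20 : mderiv 2 ('X_0 : A) = 0. Proof. by rewrite dX. Qed.
Lemma d21 : mderiv 2 ('X_1 : A) = 0. Proof. by rewrite dX. Qed.
Lemma d22 : mderiv 2 ('X_2 : A) = 1. Proof. by rewrite dX. Qed.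
End Final.

Lemma hDZ (R : realType) (i : 'I_3) (l : complex R) (p : PolyA R) : mderiv i (l *: p) = l *: mderiv i p.
Proof. exact: mderivZ. Qed.

Theorem proposition1p21 (R : realType) (a b c d : PolyA R) :
  d != 0 ->
  (compatible (tmul c (grad a)) (tmul d (grad b)) <-> \det (Jac_frac a b c d) = 0).
Proof.
move=> dn0.
have key : \det (Jac_frac a b c d) = 0 <-> Ncr (@mderiv 3 (complex R)) a b c d = 0.
  rewrite detJ //; split => [/eqP|->]; last by rewrite /toQ rmorph0 mul0r.
  rewrite mulf_eq0 invr_eq0 /toQ !tofrac_eq0 expf_eq0 (negbTE dn0) andbF orbF.
  by move/eqP.
rewrite key; split.
- move=> /(_ 1 1) [br [[Hl1 Hl2 Hsk HL Hj] [v1 [v2 v3]]]].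
  have z p : br p p = 0 by apply: skew0; exact: Hsk.
  have rep u p : br u p = mderiv 0 p * br u 'X_0 + mderiv 1 p * br u 'X_1
                       + mderiv 2 p * br u 'X_2 by exact: (repr_all Hl2 HL u p).
  have J := JT_of_br (D := @mderiv 3 (complex R)) Hsk z rep v1 v2 v3 (Hj _ _ _).
  have E : JT (@mderiv 3 (complex R))
     (tlin 1 1 (tmul c (grad a)) (tmul d (grad b))).1.1
     (tlin 1 1 (tmul c (grad a)) (tmul d (grad b))).1.2
     (tlin 1 1 (tmul c (grad a)) (tmul d (grad b))).2
     = - (((1 : complex R) * 1) *: Ncr (@mderiv 3 (complex R)) a b c d)
    := JTsc (@hDD R) (@hDM R) (@hDc R) (@hDZ R) 1 1 a b c d.
  move: J; rewrite E mulr1 scale1r => /eqP; rewrite oppr_eq0.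
  by move/eqP.
- move=> N0 l m.
  pose f := (tlin l m (tmul c (grad a)) (tmul d (grad b))).1.1.
  pose g := (tlin l m (tmul c (grad a)) (tmul d (grad b))).1.2.
  pose h := (tlin l m (tmul c (grad a)) (tmul d (grad b))).2.
  have J0 : JT (@mderiv 3 (complex R)) f g h = 0
    := JTsc0 (@hDD R) (@hDM R) (@hDc R) (@hDZ R) l m N0.
  exists (brT (@mderiv 3 (complex R)) f g h).
  split.
  + split.
    * move=> k p q r; exact: (brT_lin1s (@hDD R) (@hDM R) (@hDZ R)).
    * move=> k p q r; exact: (brT_lin2s (@hDD R) (@hDM R) (@hDZ R)).
    * move=> p q; exact: brT_skew.
    * move=> p q r; exact: (brT_leib (@hDM R)).
    * move=> p q r; exact: (brT_jac0 (@hDD R) (@hDN R) (@hDM R) (@hDc R)).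
  + have [v1 v2 v3] := brT_val (D := @mderiv 3 (complex R)) (@d00 R) (@d01 R) (@d02 R)
      (@d10 R) (@d11 R) (@d12 R) (@d20 R) (@d21 R) (@d22 R) f g h.
    split; first exact: v1.
    split; first exact: v2.
    exact: v3.
Qed.
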